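(* Let $A_1$ and $A_2$ be simple and covering atoms that are unifiable with a most general unifier $\sigma$, and suppose $A_1$ contains a compound term. Let $G$ be a flat literal and $\mathcal G$ a set of flat literals such that $\mathrm{Var}(A_1)=\mathrm{Var}(G)=\mathrm{Var}(\mathcal G)$. Then $G\sigma$ and every literal of $\mathcal G\sigma$ are flat, and $\mathrm{Var}(A_1\sigma)=\mathrm{Var}(G\sigma)=\mathrm{Var}(\mathcal G\sigma)$.
   Context: A compound term is a term that is neither a variable nor a constant. $\mathrm{Var}(E)$ denotes the set of variables of $E$. A literal is flat if each argument is a variable or a constant; it is simple if each argument is a variable, a constant, or a term $f(u_1,\dots,u_n)$ with each $u_i$ a variable or a constant. A literal is covering if every compound term $t$ occurring in it satisfies $\mathrm{Var}(t)$ equal to the set of variables of the literal (flat literals are trivially covering). *)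

(* Defs.v *)
From Stdlib Require Import List.
Import ListNotations.
Set Implicit Arguments.

Inductive term : Type :=
| Var : nat -> term
| Const : nat -> term
| Fn : nat -> list term -> term.

Record atom : Type := mkAtom { apred : nat; aargs : list term }.

(* A literal: polarity (true = positive) and an atom. *)
Record literal : Type := mkLit { lsign : bool; latom : atom }.

Fixpoint term_vars (t : term) : list nat :=
  match t with
  | Var x => [x]
  | Const _ => []
  | Fn _ ts =>
      (fix go (l : list term) : list nat :=
         match l with [] => [] | u :: l' => term_vars u ++ go l' end) ts
  end.

Fixpoint subterms (t : term) : list term :=
  t :: match t with
       | Fn _ ts =>
           (fix go (l : list term) : list term :=
              match l with [] => [] | u :: l' => subterms u ++ go l' end) ts
       | _ => []
       end.

Definition atom_vars (A : atom) : list nat := flat_map term_vars (aargs A).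
Definition lit_vars (L : literal) : list nat := atom_vars (latom L).

Definition is_compound (t : term) : Prop :=
  match t with Fn _ _ => True | _ => False end.

Definition is_var_or_const (t : term) : Prop :=
  match t with Var _ | Const _ => True | Fn _ _ => False end.

Definition occurs_in_atom (s : term) (A : atom) : Prop :=
  exists t, In t (aargs A) /\ In s (subterms t).

Definition flat_atom (A : atom) : Prop :=
  forall t, In t (aargs A) -> is_var_or_const t.

Definition simple_atom (A : atom) : Prop :=
  forall t, In t (aargs A) ->
    is_var_or_const t \/
    exists f us, t = Fn f us /\ forall u, In u us -> is_var_or_const u.

Definition same_vars (l1 l2 : list nat) : Prop :=
  forall x, In x l1 <-> In x l2.

Definition covering_atom (A : atom) : Prop :=
  forall t, occurs_in_atom t A -> is_compound t -> same_vars (term_vars t) (atom_vars A).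

Definition contains_compound (A : atom) : Prop :=
  exists t, occurs_in_atom t A /\ is_compound t.

Definition flat_lit (L : literal) : Prop := flat_atom (latom L).

Definition subst := nat -> term.

Fixpoint tsubst (s : subst) (t : term) : term :=
  match t with
  | Var x => s x
  | Const c => Const c
  | Fn f ts => Fn f (map (tsubst s) ts)
  end.

Definition asubst (s : subst) (A : atom) : atom :=
  mkAtom (apred A) (map (tsubst s) (aargs A)).

Definition lsubst (s : subst) (L : literal) : literal :=
  mkLit (lsign L) (asubst s (latom L)).

Definition unifier (s : subst) (A1 A2 : atom) : Prop := asubst s A1 = asubst s A2.

Definition mgu (s : subst) (A1 A2 : atom) : Prop :=
  unifier s A1 A2 /\
  forall th, unifier th A1 A2 -> exists eta, forall x, th x = tsubst eta (s x).

Definition litset := literal -> Prop.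

Definition set_vars (S : litset) (x : nat) : Prop :=
  exists L, S L /\ In x (lit_vars L).

Definition set_subst (s : subst) (S : litset) : litset :=
  fun L' => exists L, S L /\ L' = lsubst s L.

(* Main.v *)
Require Import Defs.
From Stdlib Require Import List Arith Lia.
Import ListNotations.

Fixpoint term_ind2 (P : term -> Prop) (hv : forall n, P (Var n)) (hc : forall c, P (Const c))
  (hf : forall f ts, Forall P ts -> P (Fn f ts)) (t : term) : P t :=
  match t with
  | Var n => hv n
  | Const c => hc c
  | Fn f ts => hf f ts ((fix go (l : list term) : Forall P l :=
       match l with [] => Forall_nil _ | u :: l' => Forall_cons _ (term_ind2 P hv hc hf u) (go l') end) ts)
  end.

Lemma tv_fn f ts : term_vars (Fn f ts) = flat_map term_vars ts.
Proof. induction ts as [|a ts IH]; [reflexivity|]. simpl in *. rewrite <- IH. reflexivity. Qed.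

Lemma TV s t x : In x (term_vars (tsubst s t)) <-> exists z, In z (term_vars t) /\ In x (term_vars (s z)).
Proof.
  revert t. refine (term_ind2 _ _ _ _).
  - intros n; simpl. split; [intros H; exists n; auto|]. intros [z [[<-|[]] H]]; auto.
  - intros c; simpl. split; [intros []|intros [z [[] _]]].
  - intros f ts IH. simpl tsubst. rewrite !tv_fn. rewrite flat_map_concat_map, map_map, <- flat_map_concat_map.
    split.
    + intros H. apply in_flat_map in H as [u [Hu Hx]].
      rewrite Forall_forall in IH. apply IH in Hx as [z [Hz Hz']]; auto.
      exists z; split; auto. apply in_flat_map; eauto.
    + intros [z [Hz Hz']]. apply in_flat_map in Hz as [u [Hu Hzu]].
      apply in_flat_map. exists u; split; auto. rewrite Forall_forall in IH. apply IH; eauto.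
Qed.

Lemma VS s A x : In x (atom_vars (asubst s A)) <-> exists z, In z (atom_vars A) /\ In x (term_vars (s z)).
Proof.
  unfold atom_vars, asubst; simpl. split.
  - intros H. apply in_flat_map in H as [t [Ht Hx]]. apply in_map_iff in Ht as [t0 [<- Ht0]].
    apply TV in Hx as [z [Hz Hz']]. exists z; split; auto. apply in_flat_map; eauto.
  - intros [z [Hz Hz']]. apply in_flat_map in Hz as [t [Ht Hzt]]. apply in_flat_map.
    exists (tsubst s t). split; [apply in_map; auto|]. apply TV; eauto.
Qed.

Fixpoint tsize (t : term) : nat :=
  match t with
  | Var _ => 0 | Const _ => 0
  | Fn _ ts => S ((fix go (l : list term) : nat := match l with [] => 0 | u :: l' => tsize u + go l' end) ts)
  end.

Lemma tsize_fn f ts : tsize (Fn f ts) = S (list_sum (map tsize ts)).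
Proof. induction ts as [|a ts IH]; [reflexivity|]. simpl in *. injection IH as IH. rewrite IH. reflexivity. Qed.

Lemma le_sum a l : In a l -> a <= list_sum l.
Proof. induction l; simpl; intros []; subst; try lia. specialize (IHl H). lia. Qed.

Lemma le_max a l : In a l -> a <= list_max l.
Proof. induction l; simpl; intros []; subst; try lia. specialize (IHl H). lia. Qed.

Lemma max_lt l k : 0 < k -> (forall a, In a l -> a < k) -> list_max l < k.
Proof. induction l; simpl; intros; auto. assert (a < k) by auto. assert (list_max l < k) by auto. lia. Qed.

Fixpoint kap (m : nat) (t : term) : term :=
  match t with
  | Var _ => Var 0
  | Const c => Const c
  | Fn f ts => if Nat.leb (tsize (Fn f ts)) m then Var 0 else
      Fn f ((fix go (l : list term) : list term := match l with [] => [] | u :: l' => kap m u :: go l' end) ts)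
  end.

Lemma kap_fn m f ts : kap m (Fn f ts) = if Nat.leb (tsize (Fn f ts)) m then Var 0 else Fn f (map (kap m) ts).
Proof.
  assert (E : (fix go (l : list term) : list term := match l with [] => [] | u :: l' => kap m u :: go l' end) ts = map (kap m) ts)
    by (induction ts as [|a ts IH]; [reflexivity|]; cbn [map]; rewrite <- IH; reflexivity).
  change (kap m (Fn f ts)) with (if Nat.leb (tsize (Fn f ts)) m then Var 0 else
      Fn f ((fix go (l : list term) : list term := match l with [] => [] | u :: l' => kap m u :: go l' end) ts)).
  rewrite E. reflexivity.
Qed.

Lemma vc_vars x us : (forall u, In u us -> is_var_or_const u) ->
  In x (flat_map term_vars us) -> In (Var x) us.
Proof.
  intros Hus H. apply in_flat_map in H as [u [Hu Hx]]. specialize (Hus u Hu).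
  destruct u; simpl in *; try contradiction. destruct Hx as [<-|[]]; auto.
Qed.

Lemma size_lt s f us x : (forall u, In u us -> is_var_or_const u) ->
  In x (term_vars (Fn f us)) -> tsize (s x) < tsize (tsubst s (Fn f us)).
Proof.
  intros Hus H. rewrite tv_fn in H. apply vc_vars in H; auto.
  simpl tsubst. rewrite tsize_fn, map_map.
  pose proof (le_sum (tsize (s x)) (map (fun x0 => tsize (tsubst s x0)) us)).
  assert (In (tsize (s x)) (map (fun x0 => tsize (tsubst s x0)) us)).
  { change (tsize (s x)) with ((fun x0 => tsize (tsubst s x0)) (Var x)). apply in_map; auto. }
  specialize (H0 H1). lia.
Qed.

Lemma map_corr (g : term -> term) l1 l2 a : map g l1 = map g l2 -> In a l1 -> exists b, In b l2 /\ g a = g b.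
Proof.
  revert l2; induction l1; intros l2 H Ha; [destruct Ha|]. destruct l2; [discriminate|].
  simpl in H. injection H as H1 H2. destruct Ha as [<-|Ha].
  - exists t; simpl; auto.
  - destruct (IHl1 _ H2 Ha) as [b [Hb Hb']]. exists b; simpl; auto.
Qed.

Lemma arg_occ t A : In t (aargs A) -> occurs_in_atom t A.
Proof. intros H. exists t; split; auto. destruct t; simpl; auto. Qed.

Lemma arg_vars x t A : In t (aargs A) -> In x (term_vars t) -> In x (atom_vars A).
Proof. intros. unfold atom_vars. apply in_flat_map; eauto. Qed.

Lemma compound_arg A : simple_atom A -> contains_compound A ->
  exists f us, In (Fn f us) (aargs A) /\ forall u, In u us -> is_var_or_const u.
Proof.
  intros Hs [t [[t0 [Ht0 Hsub]] Hc]].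
  destruct (Hs t0 Ht0) as [Hvc|[f [us [-> Hus]]]].
  - destruct t0; try contradiction; simpl in Hsub; destruct Hsub as [<-|[]]; destruct Hc.
  - exists f, us; split; auto.
Qed.

Lemma key A1 A2 s : simple_atom A1 -> covering_atom A1 -> simple_atom A2 -> covering_atom A2 ->
  mgu s A1 A2 -> contains_compound A1 -> forall x, In x (atom_vars A1) -> is_var_or_const (s x).
Proof.
  intros S1 C1 S2 C2 [U M] CC.
  injection U as Up Ua.
  set (m := list_max (map (fun x => tsize (s x)) (atom_vars A1))).
  assert (Hm : forall x, In x (atom_vars A1) -> tsize (s x) <= m).
  { intros x Hx. apply le_max. apply (in_map (fun x => tsize (s x))); auto. }
  destruct (@compound_arg A1 S1 CC) as [f [u [Hfu Hu]]].
  assert (V1 : forall x, In x (term_vars (Fn f u)) <-> In x (atom_vars A1)).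
  { apply C1; [apply arg_occ; auto| exact I]. }
  assert (Big1 : forall g w, In (Fn g w) (aargs A1) -> m < tsize (tsubst s (Fn g w))).
  { intros g w Hg. assert (Hw : forall v, In v w -> is_var_or_const v).
    { destruct (S1 _ Hg) as [[]|[g' [w' [E Hw']]]]. injection E as -> ->; auto. }
    apply max_lt. { simpl tsubst. rewrite tsize_fn. lia. }
    intros a Ha. apply in_map_iff in Ha as [x [<- Hx]].
    apply size_lt; auto. apply (C1 (Fn g w)); [apply arg_occ; auto|exact I|auto]. }
  assert (Big2 : forall g w, In (Fn g w) (aargs A2) -> m < tsize (tsubst s (Fn g w))).
  { intros g w Hg. assert (Hw : forall v, In v w -> is_var_or_const v).
    { destruct (S2 _ Hg) as [[]|[g' [w' [E Hw']]]]. injection E as -> ->; auto. }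
    assert (V2 : forall z, In z (atom_vars A2) -> In z (term_vars (Fn g w))).
    { intros z Hz. apply (C2 (Fn g w)); [apply arg_occ; auto|exact I|auto]. }
    assert (Pos : 0 < tsize (tsubst s (Fn g w))) by (simpl tsubst; rewrite tsize_fn; lia).
    apply max_lt; auto.
    intros a Ha. apply in_map_iff in Ha as [x [<- Hx]].
    destruct (map_corr _ _ _ _ Ua Hfu) as [sj [Hsj Esj]].
    assert (Hxt : tsize (s x) < tsize (tsubst s (Fn f u))) by (apply size_lt; auto; apply V1; auto).
    destruct sj as [y|c|g' w'].
    - simpl in Esj. assert (tsize (s y) < tsize (tsubst s (Fn g w))).
      { apply size_lt; auto. apply V2. apply (arg_vars y (Var y)); simpl; auto. }
      simpl tsubst in Hxt. rewrite Esj in Hxt. lia.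
    - simpl in Esj. discriminate.
    - simpl in Esj. injection Esj as _ Em.
      assert (Hxu : In (Var x) u) by (apply vc_vars; auto; rewrite <- (tv_fn f u); apply V1; auto).
      destruct (map_corr _ _ _ _ Em Hxu) as [v [Hv Ev]]. simpl in Ev.
      assert (Hw' : forall v, In v w' -> is_var_or_const v).
      { destruct (S2 _ Hsj) as [[]|[g2 [w2 [E Hw2]]]]. injection E as -> ->; auto. }
      destruct v as [z|c|]; [| |destruct (Hw' _ Hv)]; simpl in Ev; rewrite Ev.
      + apply size_lt; auto. apply V2. apply (arg_vars z (Fn g' w')); auto.
        rewrite tv_fn. apply in_flat_map. exists (Var z); simpl; auto.
      + simpl. auto. }
  set (th := fun z => kap m (s z)).
  assert (Arg : forall A, simple_atom A -> (forall g w, In (Fn g w) (aargs A) -> m < tsize (tsubst s (Fn g w))) ->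
     forall t, In t (aargs A) -> tsubst th t = kap m (tsubst s t)).
  { intros A SA BA t Ht. destruct (SA t Ht) as [Hvc|[g [w [-> Hw]]]].
    - destruct t; simpl in *; auto; contradiction.
    - simpl tsubst. rewrite kap_fn. specialize (BA g w Ht). simpl tsubst in BA.
      destruct (Nat.leb_spec (tsize (Fn g (map (tsubst s) w))) m); [lia|].
      f_equal. rewrite map_map. apply map_ext_in. intros v Hv. pose proof (Hw v Hv) as Hv'; destruct v; simpl in *; auto; contradiction. }
  assert (Uth : unifier th A1 A2).
  { unfold unifier, asubst. rewrite Up. f_equal.
    rewrite (map_ext_in _ (fun t => kap m (tsubst s t)) (aargs A1)) by (apply Arg; auto).
    rewrite (map_ext_in _ (fun t => kap m (tsubst s t)) (aargs A2)) by (apply Arg; auto).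
    rewrite <- (map_map (tsubst s) (kap m)), <- (map_map (tsubst s) (kap m)). congruence. }
  destruct (M th Uth) as [eta Heta].
  intros x Hx. specialize (Heta x). unfold th in Heta. specialize (Hm x Hx).
  destruct (s x) as [n|c|g l] eqn:E; simpl; auto.
  rewrite kap_fn in Heta. destruct (Nat.leb_spec (tsize (Fn g l)) m); [|lia]. discriminate.
Qed.

Lemma flat_subst s L : flat_lit L -> (forall z, In z (lit_vars L) -> is_var_or_const (s z)) ->
  flat_lit (lsubst s L).
Proof.
  intros HF HV t Ht. simpl in Ht. apply in_map_iff in Ht as [t0 [<- Ht0]].
  specialize (HF t0 Ht0). destruct t0; simpl in *; auto; try contradiction.
  apply HV. apply (arg_vars n (Var n)); simpl; auto.
Qed.

Theorem mainTheorem5 (A1 A2 : atom) (sigma : subst) (G : literal) (GG : litset) :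
  simple_atom A1 -> covering_atom A1 ->
  simple_atom A2 -> covering_atom A2 ->
  mgu sigma A1 A2 ->
  contains_compound A1 ->
  flat_lit G ->
  (forall L, GG L -> flat_lit L) ->
  (forall x, In x (atom_vars A1) <-> In x (lit_vars G)) ->
  (forall x, In x (atom_vars A1) <-> set_vars GG x) ->
  flat_lit (lsubst sigma G) /\
  (forall L, set_subst sigma GG L -> flat_lit L) /\
  (forall x, In x (atom_vars (asubst sigma A1)) <-> In x (lit_vars (lsubst sigma G))) /\
  (forall x, In x (atom_vars (asubst sigma A1)) <-> set_vars (set_subst sigma GG) x).
Proof.
  intros S1 C1 S2 C2 M CC FG FGG HG HGG.
  pose proof (@key A1 A2 sigma S1 C1 S2 C2 M CC) as K.
  split; [|split; [|split]].
  - apply flat_subst; auto. intros z Hz. apply K, HG; auto.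
  - intros L' [L [HL ->]]. apply flat_subst; auto. intros z Hz. apply K, HGG. exists L; auto.
  - intros x. unfold lit_vars. simpl. rewrite !VS. split; intros [z [Hz Hx]]; exists z; split; auto; apply HG; auto.
  - intros x. rewrite VS. split.
    + intros [z [Hz Hx]]. apply HGG in Hz as [L [HL HzL]]. exists (lsubst sigma L). split.
      * exists L; auto.
      * unfold lit_vars; simpl. apply VS. eauto.
    + intros [L' [[L [HL ->]] Hx]]. unfold lit_vars in Hx; simpl in Hx. apply VS in Hx as [z [Hz Hx]].
      exists z; split; auto. apply HGG. exists L; auto.
Qed.
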